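(* The category $\mathcal J$ is isomorphic to Quillen's localization construction $\Sigma^{-1}\Sigma$ on the category $\Sigma$ of finite sets and bijections.
   Context: $\mathcal J$ is the category whose objects are pairs $(\mathbf n_1,\mathbf n_2)$ of finite sets $\mathbf n_i=\{1,\dots,n_i\}$, $n_i\ge0$. A morphism $(\mathbf m_1,\mathbf m_2)\to(\mathbf n_1,\mathbf n_2)$ is a triple $(\beta_1,\beta_2,\sigma)$ with $\beta_i\colon\mathbf m_i\to\mathbf n_i$ injective maps and $\sigma\colon\mathbf n_1\setminus\beta_1(\mathbf m_1)\to\mathbf n_2\setminus\beta_2(\mathbf m_2)$ a bijection. The composite of $(\alpha_1,\alpha_2,\rho)\colon(\mathbf l_1,\mathbf l_2)\to(\mathbf m_1,\mathbf m_2)$ and $(\beta_1,\beta_2,\sigma)$ is $(\beta_1\alpha_1,\beta_2\alpha_2,\tau)$ where $\tau(s)=\sigma(s)$ for $s\in\mathbf n_1\setminus\beta_1(\mathbf m_1)$ and $\tau(\beta_1(t))=\beta_2(\rho(t))$ for $t\in\mathbf m_1\setminus\alpha_1(\mathbf l_1)$. $\Sigma$ is the category with objects $\mathbf n$, $n\ge 0$, and bijections as morphisms, symmetric monoidal under concatenation $\sqcup$. $\Sigma^{-1}\Sigma$ (using the monoidal right action of $\Sigma$ on itself) has objects pairs $(\mathbf n_1,\mathbf n_2)$ of objects of $\Sigma$; a morphism $(\mathbf m_1,\mathbf m_2)\to(\mathbf n_1,\mathbf n_2)$ is an isomorphism class of pairs $(\mathbf l,(\alpha_1,\alpha_2))$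 with $\mathbf l$ an object of $\Sigma$ and $\alpha_i\colon\mathbf m_i\sqcup\mathbf l\to\mathbf n_i$ bijections, where $(\mathbf l,(\alpha_1,\alpha_2))\sim(\mathbf l,(\alpha_1',\alpha_2'))$ if there is $\sigma\in\Sigma(\mathbf l,\mathbf l)$ with $\alpha_i'\circ(1_{\mathbf m_i}\sqcup\sigma)=\alpha_i$ for $i=1,2$; composition of $[\mathbf l,(\alpha_1,\alpha_2)]$ followed by $[\mathbf l',(\beta_1,\beta_2)]$ is $[\mathbf l\sqcup\mathbf l',(\beta_i\circ(\alpha_i\sqcup 1_{\mathbf l'}))_i]$. *)

(* Defs.v *)
(* Concrete presentations of the categories J and
   Sigma^{-1}Sigma, with objects pairs of natural numbers (n1, n2),
   standing for ( {1..n1}, {1..n2} ) = ('I_n1, 'I_n2). *)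
From mathcomp Require Import all_boot.
Set Implicit Arguments. Unset Strict Implicit. Unset Printing Implicit Defensive.

Definition Ob := (nat * nat)%type.

(* A morphism (m1,m2) -> (n1,n2) is a triple (beta1, beta2, sigma);
   the bijection sigma : n1 \ beta1(m1) -> n2 \ beta2(m2) is encoded by its
   graph as a finite function s : 'I_n1 -> option 'I_n2 with
   s x = Some (sigma x) for x outside the image of beta1 and s x = None on
   that image (so the encoding is canonical and Leibniz equality of raw
   data is equality of triples). *)
Definition Jhom (a b : Ob) : Type :=
  ({ffun 'I_a.1 -> 'I_b.1} * {ffun 'I_a.2 -> 'I_b.2}
   * {ffun 'I_b.1 -> option 'I_b.2})%type.

Definition Jvalid (a b : Ob) (f : Jhom a b) : Prop :=
  let '(b1, b2, s) := f in
  injective b1 /\ injective b2 /\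
  (forall x, s x = None <-> x \in codom b1) /\
  (forall x y, s x = Some y -> y \notin codom b2) /\
  (forall x x' y, s x = Some y -> s x' = Some y -> x = x') /\
  (forall y, y \notin codom b2 -> exists x, s x = Some y).

Definition Jid (a : Ob) : Jhom a a :=
  ([ffun i => i], [ffun i => i], [ffun _ => None]).

Definition Jcomp (a b c : Ob) (f : Jhom a b) (g : Jhom b c) : Jhom a c :=
  let '(a1, a2, r) := f in
  let '(b1, b2, s) := g in
  ([ffun i => b1 (a1 i)], [ffun i => b2 (a2 i)],
   [ffun x => match s x with
              | Some y => Some y
              | None => match [pick t | b1 t == x] with
                        | Some t => match r t with
                                    | Some y => Some (b2 y)
                                    | None => None
                                    end
                        | None => None
                        end
              end]).

(* concatenation m |_| l is 'I_(m + l) (first m, then l) *)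
Definition sumid (m l l' : nat) (sg : 'I_l -> 'I_l') : 'I_(m + l) -> 'I_(m + l') :=
  fun i => match split i with
           | inl j => lshift l' j
           | inr k => rshift m (sg k)
           end.

Definition sumfst (m n l l' : nat) (al : 'I_(m + l) -> 'I_n) :
  'I_(m + l + l') -> 'I_(n + l') :=
  fun i => match split i with
           | inl j => lshift l' (al j)
           | inr k => rshift n k
           end.

(* raw representatives (l, (alpha1, alpha2)) *)
Definition SHom (a b : Ob) : Type :=
  {l : nat & (('I_(a.1 + l) -> 'I_b.1) * ('I_(a.2 + l) -> 'I_b.2))%type}.

Definition Svalid (a b : Ob) (x : SHom a b) : Prop :=
  bijective (projT2 x).1 /\ bijective (projT2 x).2.

(* (l,(al1,al2)) ~ (l',(al1',al2')) iff there is a bijection sg : l -> l'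
   with al_i' o (1 |_| sg) = al_i  (a bijection 'I_l -> 'I_l' forces l = l') *)
Definition Seqv (a b : Ob) (x y : SHom a b) : Prop :=
  exists sg : 'I_(projT1 x) -> 'I_(projT1 y),
    [/\ bijective sg,
        (forall i, (projT2 y).1 (sumid sg i) = (projT2 x).1 i)
      & (forall i, (projT2 y).2 (sumid sg i) = (projT2 x).2 i)].

Definition Sid (a : Ob) : SHom a a :=
  existT _ 0 (fun i => cast_ord (addn0 a.1) i, fun i => cast_ord (addn0 a.2) i).

(* [l,(al1,al2)] followed by [l',(be1,be2)] is
   [l |_| l', (be_i o (al_i |_| 1_l'))_i] *)
Definition Scomp (a b c : Ob) (x : SHom a b) (y : SHom b c) : SHom a c :=
  existT _ (projT1 x + projT1 y)
   (fun i => (projT2 y).1 (@sumfst a.1 b.1 (projT1 x) (projT1 y) (projT2 x).1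
                                  (cast_ord (addnA a.1 (projT1 x) (projT1 y)) i)),
    fun i => (projT2 y).2 (@sumfst a.2 b.2 (projT1 x) (projT1 y) (projT2 x).2
                                  (cast_ord (addnA a.2 (projT1 x) (projT1 y)) i))).

(* Main.v *)
Require Import Defs.
From mathcomp Require Import all_boot.
From Stdlib Require Import ClassicalEpsilon.
Set Implicit Arguments. Unset Strict Implicit. Unset Printing Implicit Defensive.

Lemma ord_split_ind m n (P : 'I_(m+n) -> Prop) :
  (forall j, P (lshift n j)) -> (forall k, P (rshift m k)) -> forall i, P i.
Proof. move=> Hl Hr i; rewrite -(splitK i); case: (split i) => /=. by []. by []. Qed.

Lemma split_l m n (j : 'I_m) : split (lshift n j) = inl j.
Proof. exact: (unsplitK (inl _ j)). Qed.
Lemma split_r m n (k : 'I_n) : split (rshift m k) = inr k.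
Proof. exact: (unsplitK (inr _ k)). Qed.

Lemma inj_surj_bij (A B : finType) (f : A -> B) :
  injective f -> (forall y, exists x, f x = y) -> bijective f.
Proof.
move=> inj sur; have [g Hg] := fin_all_exists sur.
by exists g => // x; apply: inj; rewrite Hg.
Qed.

Lemma bij_ind (A B : Type) (f : A -> B) : bijective f ->
  forall P : B -> Prop, (forall a, P (f a)) -> forall b, P b.
Proof. by case=> g _ fg P H b; rewrite -(fg b). Qed.

Lemma lr_neq m n (j : 'I_m) (k : 'I_n) : lshift n j <> rshift m k.
Proof. by move/eqP; rewrite eq_lrshift. Qed.

Definition Gs a b (x : SHom a b) (z : 'I_b.1) : option 'I_b.2 :=
  omap (fun k => (projT2 x).2 (rshift a.2 k))
       [pick k : 'I_(projT1 x) | (projT2 x).1 (rshift a.1 k) == z].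

Definition G a b (x : SHom a b) : Jhom a b :=
  ([ffun j => (projT2 x).1 (lshift _ j)], [ffun j => (projT2 x).2 (lshift _ j)],
   [ffun z => Gs x z]).

Lemma Gs_r a b (x : SHom a b) k : injective (projT2 x).1 ->
  Gs x ((projT2 x).1 (rshift a.1 k)) = Some ((projT2 x).2 (rshift a.2 k)).
Proof.
move=> inj; rewrite /Gs; case: pickP => [k' /eqP/inj/rshift_inj -> //|].
by move/(_ k); rewrite eqxx.
Qed.

Lemma Gs_l a b (x : SHom a b) j : injective (projT2 x).1 ->
  Gs x ((projT2 x).1 (lshift (projT1 x) j)) = None.
Proof.
move=> inj; rewrite /Gs; case: pickP => [k' /eqP/inj H|//].
by exfalso; apply: (lr_neq (esym H)).
Qed.
Arguments Gs_l {a b} x j _.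
Arguments Gs_r {a b} x k _.

Lemma sumid_l m l l' (sg : 'I_l -> 'I_l') j : sumid sg (lshift l j) = lshift l' j :> 'I_(m + l').
Proof. by rewrite /sumid split_l. Qed.
Lemma sumid_r m l l' (sg : 'I_l -> 'I_l') k : sumid sg (rshift m k) = rshift m (sg k).
Proof. by rewrite /sumid split_r. Qed.

Lemma Seqv_G a b (x y : SHom a b) : Svalid x -> Svalid y -> (Seqv x y <-> G x = G y).
Proof.
case: x => l [al1 al2]; case: y => l' [be1 be2]; rewrite /Svalid /=.
move=> [ba1 ba2] [bb1 bb2].
have ia1 := bij_inj ba1; have ia2 := bij_inj ba2.
have ib1 := bij_inj bb1; have ib2 := bij_inj bb2.
split.
- case=> sg /= [bsg H1 H2].
  have E1 j : be1 (lshift l' j) = al1 (lshift l j) by rewrite -H1 sumid_l.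
  have E2 j : be2 (lshift l' j) = al2 (lshift l j) by rewrite -H2 sumid_l.
  have R1 k : be1 (rshift a.1 (sg k)) = al1 (rshift a.1 k) by rewrite -H1 sumid_r.
  have R2 k : be2 (rshift a.2 (sg k)) = al2 (rshift a.2 k) by rewrite -H2 sumid_r.
  rewrite /G /=; f_equal; [f_equal|]; apply/ffunP => z; rewrite !ffunE //.
  move: z; apply: (bij_ind ba1); apply: ord_split_ind => [j|k].
  + rewrite (Gs_l (existT _ l (al1, al2)) j) //.
    by rewrite -E1 (Gs_l (existT _ l' (be1, be2)) j).
  + rewrite (Gs_r (existT _ l (al1, al2)) k) //.
    by rewrite -R1 (Gs_r (existT _ l' (be1, be2)) (sg k)) //= R2.
- move=> [/ffunP E1 /ffunP E2 /ffunP E3].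
  have ES z : Gs (existT _ l (al1, al2)) z = Gs (existT _ l' (be1, be2)) z.
    by have := E3 z; rewrite !ffunE.
  have EL1 j : be1 (lshift l' j) = al1 (lshift l j).
    by have := E1 j; rewrite !ffunE.
  have EL2 j : be2 (lshift l' j) = al2 (lshift l j).
    by have := E2 j; rewrite !ffunE.
  have ex k : exists k', be1 (rshift a.1 k') = al1 (rshift a.1 k).
    have := ES (al1 (rshift a.1 k)); rewrite (Gs_r (existT _ l (al1, al2)) k) //.
    move: (al1 (rshift a.1 k)) => z; move: z; apply: (bij_ind bb1).
    apply: ord_split_ind => [j|k'].
    * by rewrite (Gs_l (existT _ l' (be1, be2)) j).
    * by move=> _; exists k'.
  have [sg Hsg] := fin_all_exists ex.
  have R2 k : be2 (rshift a.2 (sg k)) = al2 (rshift a.2 k).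
    have := ES (al1 (rshift a.1 k)); rewrite (Gs_r (existT _ l (al1, al2)) k) // -(Hsg k).
    by rewrite (Gs_r (existT _ l' (be1, be2))) //= => [[]].
  exists sg; split => /=.
  + apply: inj_surj_bij.
      by move=> k1 k2 H; apply/rshift_inj/ia1; rewrite -!Hsg H.
    move=> k'; have := ES (be1 (rshift a.1 k')).
    rewrite (Gs_r (existT _ l' (be1, be2))) //.
    move Ez: (be1 (rshift a.1 k')) => z.
    move: z Ez; apply: (bij_ind ba1); apply: ord_split_ind => [j|k] Ez.
    * by rewrite (Gs_l (existT _ l (al1, al2)) j).
    * by move=> _; exists k; apply/rshift_inj/ib1; rewrite Hsg Ez.
  + by apply: ord_split_ind => [j|k]; rewrite ?sumid_l ?sumid_r.
  + by apply: ord_split_ind => [j|k]; rewrite ?sumid_l ?sumid_r.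
Qed.

Lemma G_valid a b (x : SHom a b) : Svalid x -> Jvalid (G x).
Proof.
case: x => l [al1 al2]; rewrite /Svalid /= => [[ba1 ba2]].
have ia1 := bij_inj ba1; have ia2 := bij_inj ba2.
set X := existT _ l (al1, al2).
have Hl j : Gs X (al1 (lshift l j)) = None := Gs_l X j ia1.
have Hr k : Gs X (al1 (rshift a.1 k)) = Some (al2 (rshift a.2 k)) := Gs_r X k ia1.
rewrite /Jvalid /G /=; split; [|split; [|split; [|split; [|split]]]].
- by move=> j j' /eqP; rewrite !ffunE => /eqP /ia1 /lshift_inj.
- by move=> j j' /eqP; rewrite !ffunE => /eqP /ia2 /lshift_inj.
- apply: (bij_ind ba1); apply: ord_split_ind => [j|k]; rewrite ffunE.
  + by rewrite Hl; split => // _; apply/codomP; exists j; rewrite ffunE.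
  + rewrite Hr; split => // /codomP [j]; rewrite ffunE => /ia1 H.
    by case: (lr_neq (esym H)).
- apply: (bij_ind ba1); apply: ord_split_ind => [j|k] y; rewrite ffunE.
  + by rewrite Hl.
  + rewrite Hr => [[<-]]; apply/codomP => [[j]]; rewrite ffunE => /ia2 H.
    by case: (lr_neq (esym H)).
- apply: (bij_ind ba1); apply: ord_split_ind => [j|k]; 
    apply: (bij_ind ba1); apply: ord_split_ind => [j'|k'] y; rewrite !ffunE ?Hl ?Hr //.
  by move=> [<-] [/ia2 /rshift_inj ->].
- apply: (bij_ind ba2); apply: ord_split_ind => [j|k].
  + by move/codomP => []; exists j; rewrite ffunE.
  + by move=> _; exists (al1 (rshift a.1 k)); rewrite ffunE Hr.
Qed.

Lemma Sid_valid a : Svalid (Sid a).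
Proof.
by split; exists (cast_ord (esym (addn0 _))) => i; apply: val_inj.
Qed.

Lemma G_Sid a : G (Sid a) = Jid a.
Proof.
rewrite /G /Jid /=; f_equal; [f_equal|]; apply/ffunP => z; rewrite !ffunE //.
- exact: val_inj.
- exact: val_inj.
- rewrite /Gs; case: pickP => // [[k Hk]]; by [].
Qed.

Lemma Jid_valid a : Jvalid (Jid a).
Proof.
rewrite /Jvalid /Jid; split; [|split; [|split; [|split; [|split]]]].
- by move=> i j; rewrite !ffunE.
- by move=> i j; rewrite !ffunE.
- by move=> x; rewrite ffunE; split => // _; apply/codomP; exists x; rewrite ffunE.
- by move=> x y; rewrite ffunE.
- by move=> x x' y; rewrite ffunE.
- by move=> y /codomP []; exists y; rewrite ffunE.
Qed.

Lemma sumfst_l m n l l' (al : 'I_(m + l) -> 'I_n) i :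
  @sumfst _ _ _ l' al (lshift l' i) = lshift l' (al i).
Proof. by rewrite /sumfst split_l. Qed.
Lemma sumfst_r m n l l' (al : 'I_(m + l) -> 'I_n) (k : 'I_l') :
  @sumfst _ _ _ l' al (rshift (m + l) k) = rshift n k.
Proof. by rewrite /sumfst split_r. Qed.

Lemma sumfst_bij m n l l' (al : 'I_(m + l) -> 'I_n) : bijective al ->
  bijective (@sumfst _ _ _ l' al).
Proof.
case=> g K1 K2.
exists (fun i : 'I_(n + l') => match split i with inl j => lshift l' (g j)
                                | inr k => rshift (m + l) k end).
- by apply: ord_split_ind => [j|k]; rewrite ?sumfst_l ?sumfst_r ?split_l ?split_r ?K1.
- by apply: ord_split_ind => [j|k]; rewrite ?split_l ?split_r ?sumfst_l ?sumfst_r ?K2.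
Qed.

Lemma cast_bij n m (e : n = m) : bijective (cast_ord e).
Proof. exists (cast_ord (esym e)); [exact: cast_ordK | exact: cast_ordKV]. Qed.

Lemma castA_ll m l l' (j : 'I_m) :
  cast_ord (addnA m l l') (lshift (l + l') j) = lshift l' (lshift l j).
Proof. exact: val_inj. Qed.
Lemma castA_rl m l l' (k : 'I_l) :
  cast_ord (addnA m l l') (rshift m (lshift l' k)) = lshift l' (rshift m k).
Proof. exact: val_inj. Qed.
Lemma castA_rr m l l' (k : 'I_l') :
  cast_ord (addnA m l l') (rshift m (rshift l k)) = rshift (m + l) k.
Proof. by apply: val_inj => /=; rewrite addnA. Qed.

Lemma Scomp_valid a b c (x : SHom a b) (y : SHom b c) :
  Svalid x -> Svalid y -> Svalid (Scomp x y).
Proof.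
case: x => l [al1 al2]; case: y => l' [be1 be2]; rewrite /Svalid /=.
move=> [ba1 ba2] [bb1 bb2]; split.
- exact: (bij_comp bb1 (bij_comp (@sumfst_bij _ _ _ l' _ ba1) (cast_bij _))).
- exact: (bij_comp bb2 (bij_comp (@sumfst_bij _ _ _ l' _ ba2) (cast_bij _))).
Qed.

Lemma G_Scomp a b c (x : SHom a b) (y : SHom b c) :
  Svalid x -> Svalid y -> G (Scomp x y) = Jcomp (G x) (G y).
Proof.
move=> vx vy; have vs := Scomp_valid vx vy.
move: vs; case: x vx => l [al1 al2]; case: y vy => l' [be1 be2].
rewrite /Svalid /= => [[bb1 bb2]] [ba1 ba2] [bs1 bs2].
have ia1 := bij_inj ba1; have ib1 := bij_inj bb1; have is1 := bij_inj bs1.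
rewrite /G /Jcomp /=; f_equal; [f_equal|]; apply/ffunP => z; rewrite !ffunE //.
- by rewrite castA_ll sumfst_l.
- by rewrite castA_ll sumfst_l.
set X := existT _ l (al1, al2); set Y := existT _ l' (be1, be2).
set S := Scomp X Y.
move: z; apply: (bij_ind bs1); apply: ord_split_ind => [j|].
- rewrite (Gs_l S j is1) castA_ll sumfst_l (Gs_l Y _ ib1).
  case: pickP => [t /eqP|/(_ (al1 (lshift l j)))]; last by rewrite ffunE eqxx.
  rewrite ffunE => /ib1 /lshift_inj ->; by rewrite ffunE (Gs_l X j ia1).
- apply: ord_split_ind => [k1|k2].
  + rewrite (Gs_r S _ is1) /= castA_rl castA_rl !sumfst_l (Gs_l Y _ ib1).
    case: pickP => [t /eqP|/(_ (al1 (rshift a.1 k1)))]; last by rewrite ffunE eqxx.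
    rewrite ffunE => /ib1 /lshift_inj ->; by rewrite !ffunE (Gs_r X k1 ia1) /= ffunE.
  + by rewrite (Gs_r S _ is1) /= !castA_rr !sumfst_r (Gs_r Y k2 ib1).
Qed.

Lemma G_surj a b (f : Jhom a b) : Jvalid f -> exists x : SHom a b, Svalid x /\ G x = f.
Proof.
case: f => [[b1 b2] s] /= [ib1 [ib2 [Hn [Hs [Hsi Hsur]]]]].
pose P := [set z | s z != None].
pose e := @enum_val _ (mem P).
have eP k : s (e k) != None by have := enum_valP k; rewrite inE.
have exw k : exists y, s (e k) = Some y by move: (eP k); case: (s (e k)) => // y _; exists y.
have [w Hw] := fin_all_exists exw.
pose al1 (i : 'I_(a.1 + #|P|)) := match split i with inl j => b1 j | inr k => e k end.
pose al2 (i : 'I_(a.2 + #|P|)) := match split i with inl j => b2 j | inr k => w k end.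
have A1l j : al1 (lshift _ j) = b1 j by rewrite /al1 split_l.
have A1r k : al1 (rshift _ k) = e k by rewrite /al1 split_r.
have A2l j : al2 (lshift _ j) = b2 j by rewrite /al2 split_l.
have A2r k : al2 (rshift _ k) = w k by rewrite /al2 split_r.
have NB j k : b1 j <> e k.
  move=> E; have : s (b1 j) = None by apply/Hn/codomP; exists j.
  by rewrite E; apply/eqP.
have NB2 j k : b2 j <> w k.
  move=> E; have := Hs _ _ (Hw k); rewrite -E codom_f //.
have ba1 : bijective al1.
  apply: inj_surj_bij.
    apply: ord_split_ind => [j|k]; apply: ord_split_ind => [j'|k'];
      rewrite ?A1l ?A1r ?A2l ?A2r.
    - by move/ib1 ->.
    - by move/NB.
    - by move/esym/NB.
    - by move/enum_val_inj ->.
  move=> z; case Ez: (s z) => [y|].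
  - have zP : z \in P by rewrite inE Ez.
    exists (rshift a.1 (enum_rank_in zP z)); rewrite A1r /e enum_rankK_in //.
  - have /codomP [j ->] : z \in codom b1 by apply/Hn.
    by exists (lshift _ j); rewrite A1l.
have ba2 : bijective al2.
  apply: inj_surj_bij.
    apply: ord_split_ind => [j|k]; apply: ord_split_ind => [j'|k'];
      rewrite ?A1l ?A1r ?A2l ?A2r.
    - by move/ib2 ->.
    - by move/NB2.
    - by move/esym/NB2.
    - move=> E; congr rshift; apply: enum_val_inj; apply: (Hsi _ _ (w k)) => //.
      by rewrite E.
  move=> y; case: (boolP (y \in codom b2)).
  - by move/codomP => [j ->]; exists (lshift _ j); rewrite A2l.
  - move/Hsur => [z Ez].
    have zP : z \in P by rewrite inE Ez.
    exists (rshift a.2 (enum_rank_in zP z)); rewrite A2r.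
    have := Hw (enum_rank_in zP z); rewrite /e enum_rankK_in // Ez.
    by case.
exists (existT _ #|P| (al1, al2)); split; first by split.
rewrite /G /=; f_equal; [f_equal|]; apply/ffunP => z; rewrite !ffunE //.
set X := existT _ #|P| (al1, al2) : SHom a b.
move: z; apply: (bij_ind ba1); apply: ord_split_ind => [j|k].
- rewrite (Gs_l X j (bij_inj ba1)) A1l; symmetry; apply/Hn/codomP; by exists j.
- by rewrite (Gs_r X k (bij_inj ba1)) /= A1r A2r Hw.
Qed.

Definition Fdef a b (f : Jhom a b) : SHom a b :=
  existT _ 0 (fun i => f.1.1 (cast_ord (addn0 a.1) i),
              fun i => f.1.2 (cast_ord (addn0 a.2) i)).

Definition FF a b (f : Jhom a b) : SHom a b :=
  epsilon (inhabits (Fdef f)) (fun x => Svalid x /\ G x = f).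

Lemma FF_spec a b (f : Jhom a b) : Jvalid f -> Svalid (FF f) /\ G (FF f) = f.
Proof. move=> v; rewrite /FF; apply: (epsilon_spec (inhabits (Fdef f)) (fun x => Svalid x /\ G x = f)); exact: G_surj. Qed.

Theorem proposition4p3 :
  exists (F0 : Ob -> Ob) (F : forall a b : Ob, Jhom a b -> SHom (F0 a) (F0 b)),
    bijective F0 /\
        (forall a b (f : Jhom a b), Jvalid f -> Svalid (F a b f)) /\
        (forall a b (f g : Jhom a b), Jvalid f -> Jvalid g ->
            (Seqv (F a b f) (F a b g) <-> f = g)) /\
        (forall a b (h : SHom (F0 a) (F0 b)), Svalid h ->
            exists f : Jhom a b, Jvalid f /\ Seqv (F a b f) h) /\
        (forall a, Seqv (F a a (Jid a)) (Sid (F0 a))) /\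
        (forall a b c (f : Jhom a b) (g : Jhom b c), Jvalid f -> Jvalid g ->
            Seqv (F a c (Jcomp f g)) (Scomp (F a b f) (F b c g))).
Proof.
exists id, FF; split; first by exists id.
split; first by move=> a b f /FF_spec [].
split.
  move=> a b f g vf vg; have [sf ef] := FF_spec vf; have [sg eg] := FF_spec vg.
  by rewrite Seqv_G // ef eg.
split.
  move=> a b h vh; exists (G h); split; first exact: G_valid.
  have [sf ef] := FF_spec (G_valid vh); by rewrite Seqv_G // ef.
split.
  move=> a; have [sf ef] := FF_spec (Jid_valid a).
  apply/(Seqv_G sf (Sid_valid a)); by rewrite ef G_Sid.
move=> a b c f g vf vg.
have [sf ef] := FF_spec vf; have [sg eg] := FF_spec vg.
have E : Jcomp f g = G (Scomp (FF f) (FF g)) by rewrite G_Scomp // ef eg.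
have vc : Jvalid (Jcomp f g) by rewrite E; apply: G_valid; apply: Scomp_valid.
have [sc ec] := FF_spec vc.
rewrite Seqv_G //; last exact: Scomp_valid.
by rewrite ec E.
Qed.
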